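(* Fix $x \in \mathbf{X}$ and let $(k_0,j_0)$ be the unique pair with $x \in \mathbf{X}_{k_0,j_0}$. Let $\epsilon,\delta \ge 0$. If $H_{TP}(x) \le \delta$ and $H_{WP}(x) \le \epsilon$, then $H_{CIL}(x) \le \epsilon + \delta$.
   Context: Class incremental learning setting. $\mathbf{X}$ is an input domain which is the disjoint union of task domains $\mathbf{X}_1,\dots,\mathbf{X}_T$ ($\mathbf{X}_k\cap\mathbf{X}_{k'}=\emptyset$ for $k\ne k'$), and each $\mathbf{X}_k$ is the disjoint union of class domains $\mathbf{X}_{k,j}$ ($\mathbf{X}_{k,j}\cap\mathbf{X}_{k,j'}=\emptyset$ for $j\neq j'$). $D$ is a fixed conditioning event (the data/trained model), and $\mathbf{P}(x\in A\mid D)$ denotes the probability, under a probability measure conditioned on $D$, of the event that $x$ lies in $A$; $\mathbf{P}(x\in\mathbf{X}_{k,j}\mid x\in\mathbf{X}_k, D)$ is the corresponding conditional probability (within-task prediction, WP), $\mathbf{P}(x\in\mathbf{X}_k\mid D)$ the task-id prediction (TP) probability, and $\mathbf{P}(x\in\mathbf{X}_{k,j}\mid D)$ the class-incremental (CIL) probability. The cross-entropy of distributions $p,q$ is $H(p,q)=-\sum_i p_i\log q_i$. For $x\in\mathbf{X}_{k_0,j_0}$, with one-hot ground-truth labels, define $H_{CIL}(x)=H(y,\{\mathbf{P}(x\in\mathbf{X}_{k,j}\mid D)\}_{k,j})=-\log\mathbf{P}(x\in\mathbf{X}_{k_0,j_0}\mid D)$, $H_{WP}(x)=H(\tilde y,\{\mathbf{P}(x\in\mathbf{X}_{k_0,j}\mid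 x\in\mathbf{X}_{k_0},D)\}_j)=-\log\mathbf{P}(x\in\mathbf{X}_{k_0,j_0}\mid x\in\mathbf{X}_{k_0},D)$, and $H_{TP}(x)=H(\bar y,\{\mathbf{P}(x\in\mathbf{X}_k\mid D)\}_k)=-\log\mathbf{P}(x\in\mathbf{X}_{k_0}\mid D)$, where $y,\tilde y,\bar y$ are the one-hot vectors at $(k_0,j_0)$, $j_0$ (within task $k_0$) and $k_0$ respectively. *)

(* Defs.v *)
From mathcomp Require Import all_boot all_order all_algebra.
From mathcomp Require Import all_classical all_reals all_analysis.
Set Implicit Arguments. Unset Strict Implicit. Unset Printing Implicit Defensive.
Import Order.TTheory GRing.Theory Num.Theory.
Local Open Scope classical_set_scope.
Local Open Scope ring_scope.

(* Conditional probability P(A | B) = P(A ∩ B) / P(B) (real-valued;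
   it is 0 when P(B) = 0). *)
Definition condp d (T : measurableType d) (R : realType)
  (P : probability T R) (A B : set T) : R :=
  fine (P (A `&` B)) / fine (P B).

(* -log p as an extended real: +oo at p = 0 (so a cross-entropy bound
   "<= delta" forces the probability to be positive). *)
Definition nlog (R : realType) (p : R) : \bar R :=
  if p == 0 then +oo%E else (- ln p)%:E.

Definition task_dom (X : Type) (nT : nat) (nc : 'I_nT -> nat)
  (Xc : forall k : 'I_nT, 'I_(nc k) -> set X) (k : 'I_nT) : set X :=
  \bigcup_(j in [set: 'I_(nc k)]) Xc k j.

(* Cross-entropies with one-hot ground truth at (k0, j0), for the random
   element xi : T -> X ("x"), conditioned on the event D. *)
Definition H_CIL d (T : measurableType d) (R : realType) (P : probability T R)
  (D : set T) (X : Type) (xi : T -> X) (nT : nat) (nc : 'I_nT -> nat)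
  (Xc : forall k : 'I_nT, 'I_(nc k) -> set X) (k0 : 'I_nT) (j0 : 'I_(nc k0))
  : \bar R := nlog (condp P (xi @^-1` Xc k0 j0) D).

Definition H_WP d (T : measurableType d) (R : realType) (P : probability T R)
  (D : set T) (X : Type) (xi : T -> X) (nT : nat) (nc : 'I_nT -> nat)
  (Xc : forall k : 'I_nT, 'I_(nc k) -> set X) (k0 : 'I_nT) (j0 : 'I_(nc k0))
  : \bar R :=
  nlog (condp P (xi @^-1` Xc k0 j0) (xi @^-1` task_dom Xc k0 `&` D)).

Definition H_TP d (T : measurableType d) (R : realType) (P : probability T R)
  (D : set T) (X : Type) (xi : T -> X) (nT : nat) (nc : 'I_nT -> nat)
  (Xc : forall k : 'I_nT, 'I_(nc k) -> set X) (k0 : 'I_nT) : \bar R :=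
  nlog (condp P (xi @^-1` task_dom Xc k0) D).

(* Main.v *)
Require Import Defs.
From mathcomp Require Import all_boot all_order all_algebra.
From mathcomp Require Import all_classical all_reals all_analysis.
From mathcomp Require Import lra.
Import Order.TTheory GRing.Theory Num.Theory.
Local Open Scope classical_set_scope.
Local Open Scope ring_scope.

Lemma nlog_key (R : realType) (a b c eps delta : R) :
  0 <= a -> 0 <= b -> 0 <= c ->
  (nlog (b / c) <= delta%:E)%E -> (nlog (a / b) <= eps%:E)%E ->
  (nlog (a / c) <= (eps + delta)%:E)%E.
Proof.
move=> a0 b0 c0; rewrite /nlog.
case: ifPn => [_ //|bc0]; case: ifPn => [_ //|ab0].
rewrite !lee_fin => h1 h2.
have bn : b != 0 by apply: contraNneq bc0 => ->; rewrite mul0r.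
have cn : c != 0 by apply: contraNneq bc0 => ->; rewrite invr0 mulr0.
have an : a != 0 by apply: contraNneq ab0 => ->; rewrite mul0r.
have e : a / c = (a / b) * (b / c) by rewrite mulrA divfK.
have p1 : 0 < a / b by apply: divr_gt0; rewrite lt0r ?an ?bn ?a0 ?b0.
have p2 : 0 < b / c by apply: divr_gt0; rewrite lt0r ?cn ?bn ?c0 ?b0.
rewrite e; case: ifPn => [h|_]; first by move: h; rewrite mulf_eq0 (negPf ab0) (negPf bc0).
rewrite lee_fin lnM ?posrE //.
rewrite opprD; exact: lerD.
Qed.

Theorem theorem1 (R : realType) (d : measure_display) (T : measurableType d)
  (P : probability T R) (D : set T) (X : Type) (xi : T -> X)
  (nT : nat) (nc : 'I_nT -> nat) (Xc : forall k : 'I_nT, 'I_(nc k) -> set X)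
  (mD : measurable D)
  (mXc : forall k j, measurable (xi @^-1` Xc k j))
  (cover : [set: X] = \bigcup_(k in [set: 'I_nT]) task_dom Xc k)
  (disj_task : forall k k' : 'I_nT, k != k' ->
     task_dom Xc k `&` task_dom Xc k' = set0)
  (disj_class : forall (k : 'I_nT) (j j' : 'I_(nc k)), j != j' ->
     Xc k j `&` Xc k j' = set0)
  (x : X) (k0 : 'I_nT) (j0 : 'I_(nc k0)) (hx : Xc k0 j0 x)
  (eps delta : R) (heps : 0 <= eps) (hdelta : 0 <= delta) :
  (H_TP P D xi Xc k0 <= delta%:E)%E ->
  (H_WP P D xi Xc j0 <= eps%:E)%E ->
  (H_CIL P D xi Xc j0 <= (eps + delta)%:E)%E.
Proof.
rewrite /H_TP /H_WP /H_CIL /condp.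
have -> : xi @^-1` Xc k0 j0 `&` (xi @^-1` task_dom Xc k0 `&` D)
        = xi @^-1` Xc k0 j0 `&` D.
  apply/seteqP; split => t /=; first by case=> ? [].
  by case=> h1 h2; split => //; split => //; exists j0.
apply: nlog_key; by apply: fine_ge0; apply: measure_ge0.
Qed.
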